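(* Let $G$ be a connected graph on $n$ nodes with degree vector $\mathbf d=(d_1,\dots,d_n)^T$, Laplacian $L$ and average degree $\bar d=\frac1n\sum_i d_i$. Suppose there exist a vector $\beta\in\mathbb R^n$ and a constant $C$ such that, componentwise, $$\mathbf d\;\le\;\frac{1}{2\log2}L\beta+\frac{C\bar d}{\log 2}\mathbf 1 .$$ Then there exists $k\in\{1,\dots,n\}$ and a constant $c_C$ depending only on $C$ such that, for the averaging process started at $v(0)=e_k$ (the $k$-th standard basis vector), for every $\epsilon<1$, $$\mathbb E\|v(t)-\bar v\|_1\ge\epsilon\quad\text{whenever}\quad t\le\frac{(1-\epsilon)\,n\log n}{2C}-c_C\,n .$$
   Context: Let $G=(V,E)$ be a finite, undirected graph with $V=\{1,\dots,n\}$. The averaging process on $G$: the state vector $v(t)\in\mathbb R^n$, $t=0,1,2,\dots$, starts from a given $v(0)$; at each step $t\ge 1$ an edge $\{i,j\}\in E$ is chosen uniformly at random (independently of all previous choices) and both $v_i$ and $v_j$ are replaced by $(v_i+v_j)/2$, all other coordinates unchanged. Let $\bar v=(a,\dots,a)^T$ with $a=\frac1n\sum_i v_i(0)$. $L=D-A$ is the graph Laplacian and $\mathbf 1$ the all-ones vector. Logarithms are natural. *)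

(* Defs.v *)
From HB Require Import structures.
From mathcomp Require Import all_boot all_order all_algebra.
From mathcomp Require Import all_classical all_reals all_analysis.
Set Implicit Arguments. Unset Strict Implicit. Unset Printing Implicit Defensive.
Import Order.TTheory GRing.Theory Num.Theory.
Local Open Scope ring_scope.

Definition simple_graph (n : nat) (e : rel 'I_n) : Prop :=
  symmetric e /\ irreflexive e.

Definition connected_graph (n : nat) (e : rel 'I_n) : Prop :=
  forall i j : 'I_n, connect e i j.

Section Graph.
Variables (R : realType) (n : nat) (e : rel 'I_n).

Definition deg (i : 'I_n) : R := (#|[set j | e i j]|)%:R.

Definition avg_deg : R := (\sum_i deg i) / n%:R.

Definition laplacian : 'M[R]_n :=
  \matrix_(i, j) ((if i == j then deg i else 0) - (e i j)%:R).

Definition edge_pred : pred ('I_n * 'I_n) :=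
  fun p => e p.1 p.2 && (p.1 < p.2)%N.

Definition num_edges : nat := #|edge_pred|.

Definition avg_step (v : 'I_n -> R) (i j : 'I_n) : 'I_n -> R :=
  fun k => if (k == i) || (k == j) then (v i + v j) / 2 else v k.

(* exp_avg t v F = E[ F(v(t)) ] for the averaging process started at
   v(0) = v, where at each step an edge is chosen uniformly at random,
   independently of the past (recursion on the first chosen edge). *)
Fixpoint exp_avg (t : nat) (v : 'I_n -> R) (F : ('I_n -> R) -> R) : R :=
  match t with
  | 0 => F v
  | t'.+1 =>
      (\sum_(p | edge_pred p) exp_avg t' (avg_step v p.1 p.2) F)
        / (num_edges)%:R
  end.

End Graph.

Definition basis_vec (R : realType) (n : nat) (k : 'I_n) : 'I_n -> R :=
  fun x => (x == k)%:R.

Definition mean (R : realType) (n : nat) (v : 'I_n -> R) : R :=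
  (\sum_i v i) / n%:R.

Definition dist1_mean (R : realType) (n : nat) (a : R) (v : 'I_n -> R) : R :=
  \sum_i `|v i - a|.

(* Main.v *)
Require Import Defs.
From HB Require Import structures.
From mathcomp Require Import all_boot all_order all_algebra.
From mathcomp Require Import all_classical all_reals all_analysis.
From mathcomp Require Import ring lra.
Set Implicit Arguments. Unset Strict Implicit.
Import Order.TTheory GRing.Theory Num.Theory.
Local Open Scope ring_scope.

Section S.
Variables (R : realType) (n : nat) (e : rel 'I_n).
Hypothesis NE : (num_edges e)%:R != (0:R).

Lemma exp_avg_lin t (v : 'I_n -> R) F a b :
  exp_avg e t v (fun w => a * F w + b) = a * exp_avg e t v F + b.
Proof.
elim: t v => [//|t IH] v /=.
under eq_bigr do rewrite IH.
rewrite big_split /= -mulr_sumr sumr_const mulrDl -mulrA.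
congr (_ + _).
rewrite -[X in b *+ X]/(num_edges e) -mulr_natr -mulrA mulfV // mulr1 //.
Qed.

Definition prob (w : 'I_n -> R) := (forall k, 0 <= w k) /\ \sum_k w k = 1.

Lemma sum_split2 (u : 'I_n -> R) i j : i != j ->
  \sum_k u k = u i + u j + \sum_(k | (k != i) && (k != j)) u k.
Proof.
move=> ij; rewrite (bigD1 i) //= (bigD1 j) /=; last by rewrite eq_sym.
by rewrite addrA.
Qed.

Lemma sum_step (F : 'I_n -> R -> R) (v : 'I_n -> R) i j : i != j ->
  \sum_k F k (avg_step v i j k) = \sum_k F k (v k)
     + F i ((v i + v j) / 2) + F j ((v i + v j) / 2) - F i (v i) - F j (v j).
Proof.
move=> ij; rewrite (sum_split2 _ ij) (sum_split2 (fun k => F k (v k)) ij).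
rewrite /avg_step eqxx /= eqxx orbT.
have -> : \sum_(k | (k != i) && (k != j))
     F k (if (k == i) || (k == j) then (v i + v j) / 2 else v k) =
   \sum_(k | (k != i) && (k != j)) F k (v k).
  by apply: eq_bigr => k /andP [/negbTE -> /negbTE ->].
lra.
Qed.

Lemma step_prob (v : 'I_n -> R) i j : i != j -> prob v -> prob (avg_step v i j).
Proof.
move=> ij [v0 v1]; split.
  move=> k; rewrite /avg_step; case: ifP => // _.
  by apply: divr_ge0 => //; apply: addr_ge0.
have := sum_step (fun _ x => x) v ij; rewrite /= v1 => ->.
lra.
Qed.

Lemma exp_avg_mono t (v : 'I_n -> R) F G :
  (forall w, prob w -> F w <= G w) -> prob v ->
  exp_avg e t v F <= exp_avg e t v G.
Proof.
move=> FG; elim: t v => [|t IH] v pv /=; first exact: FG.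
apply: ler_wpM2r; first by rewrite invr_ge0.
apply: ler_sum => p /andP [_ lt]; apply: IH; apply: step_prob => //.
  by rewrite neq_ltn lt.
Qed.

Definition ent (x : R) := - (x * ln x).

Lemma xlnx_le (a s : R) : 0 <= a -> a <= s -> a * ln a <= a * ln s.
Proof.
move=> a0 las; have [->|az] := eqVneq a 0; first by rewrite !mul0r.
have ap : 0 < a by rewrite lt_def az a0.
apply: ler_wpM2l => //; rewrite ler_ln // posrE //; exact: lt_le_trans las.
Qed.

Lemma ent_step (a b : R) : 0 <= a -> 0 <= b ->
  2 * ent ((a + b) / 2) - ent a - ent b <= (a + b) * ln (2:R).
Proof.
move=> a0 b0; rewrite /ent.
have [s0|sp] := eqVneq (a + b) 0.
  have az : a = 0 by lra.
  have bz : b = 0 by lra.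
  rewrite az bz !mul0r !add0r !mul0r !oppr0 mulr0; lra.
have sp' : 0 < a + b by rewrite lt_def sp addr_ge0.
rewrite ln_div ?posrE //.
have H1 := @xlnx_le a (a + b) a0 ltac:(lra).
have H2 := @xlnx_le b (a + b) b0 ltac:(lra).
have -> : 2 * - ((a + b) / 2 * (ln (a + b) - ln 2)) = - ((a+b) * ln (a+b)) + (a+b) * ln 2.
  by field.
lra.
Qed.

Lemma pairsum (h : 'I_n -> 'I_n -> R) : symmetric e -> irreflexive e ->
  \sum_(p | edge_pred e p) (h p.1 p.2 + h p.2 p.1)
  = \sum_i \sum_j (e i j)%:R * h i j.
Proof.
move=> es ei; rewrite big_split /= pair_bigA /=.
have -> : \sum_(p : 'I_n * 'I_n) (e p.1 p.2)%:R * h p.1 p.2 =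
   \sum_(p : 'I_n * 'I_n) (if e p.1 p.2 then h p.1 p.2 else 0).
  by apply: eq_bigr => p _; case: (e p.1 p.2); rewrite ?mul1r ?mul0r.
rewrite -big_mkcond [RHS](bigID (fun p : 'I_n * 'I_n => (p.1 < p.2)%N)) /=.
congr (_ + _).
have swi : injective (fun p : 'I_n * 'I_n => (p.2, p.1)).
  by move=> [a b] [c d] /= [-> ->].
rewrite [RHS](reindex_inj swi) /=; apply: eq_bigl => -[a b] /=.
rewrite /edge_pred /=.
case: (ltngtP a b) => ab; rewrite ?andbF ?andbT //=.
by rewrite (val_inj ab) ei.
Qed.

Lemma deg_sum i : deg R e i = \sum_j (e i j)%:R.
Proof.
rewrite /deg (eq_bigr (fun j => if e i j then 1 else 0)); last first.
  by move=> j _; case: (e i j).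
rewrite -big_mkcond /= sumr_const cardsE //.
Qed.

Lemma lap_i (beta : 'cV[R]_n) i :
  (laplacian R e *m beta) i 0 = \sum_j (e i j)%:R * (beta i 0 - beta j 0).
Proof.
rewrite !mxE.
under eq_bigr do rewrite mxE mulrBl.
rewrite sumrB (bigD1 i) //= big1 ?addr0; last first.
  by move=> j; rewrite eq_sym => /negbTE ->; rewrite mul0r.
under [RHS]eq_bigr do rewrite mulrBr.
by rewrite sumrB eqxx deg_sum mulr_suml.
Qed.

Definition Phi (b : 'I_n -> R) (w : 'I_n -> R) := \sum_k (ent (w k) + b k * w k).

Lemma phi_step b (v : 'I_n -> R) i j : i != j -> prob v ->
  Phi b (avg_step v i j) <=
  Phi b v + ((v i * ln 2 - (b i - b j) * v i / 2) + (v j * ln 2 - (b j - b i) * v j / 2)).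
Proof.
move=> ij [v0 _]; rewrite /Phi (sum_step (fun k x => ent x + b k * x) v ij).
have := @ent_step (v i) (v j) (v0 i) (v0 j); rewrite /ent; lra.
Qed.

Lemma phi_avg b (K : R) (v : 'I_n -> R) : symmetric e -> irreflexive e ->
  (forall i, ln 2 * \sum_j (e i j)%:R - (\sum_j (e i j)%:R * (b i - b j)) / 2 <= K) ->
  prob v ->
  (\sum_(p | edge_pred e p) Phi b (avg_step v p.1 p.2)) / (num_edges e)%:R
  <= Phi b v + K / (num_edges e)%:R.
Proof.
move=> es ei HK pv.
have Np : 0 < (num_edges e)%:R :> R by rewrite lt_def NE ler0n.
rewrite ler_pdivrMr // mulrDl divfK //.
apply: le_trans (_ : \sum_(p | edge_pred e p) (Phi b v +
   ((v p.1 * ln 2 - (b p.1 - b p.2) * v p.1 / 2) +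
    (v p.2 * ln 2 - (b p.2 - b p.1) * v p.2 / 2))) <= _).
  apply: ler_sum => p /andP [_ lt]; apply: phi_step => //; by rewrite neq_ltn lt.
rewrite big_split /= sumr_const -[X in Phi b v *+ X]/(num_edges e) -[Phi b v *+ _]mulr_natr lerD2l.
rewrite (pairsum (fun i j => v i * ln 2 - (b i - b j) * v i / 2)) //.
case: pv => v0 v1.
apply: le_trans (_ : \sum_i v i * K <= _); last by rewrite -mulr_suml v1 mul1r.
apply: ler_sum => i _.
have -> : \sum_j (e i j)%:R * (v i * ln 2 - (b i - b j) * v i / 2) =
  v i * (ln 2 * \sum_j (e i j)%:R - (\sum_j (e i j)%:R * (b i - b j)) / 2).
  transitivity (\sum_j v i * (ln 2 * (e i j)%:R - (e i j)%:R * (b i - b j) / 2)).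
    by apply: eq_bigr => j _; ring.
  by rewrite -mulr_sumr sumrB -mulr_sumr -mulr_suml.
by apply: ler_wpM2l; [exact: v0 | exact: HK].
Qed.

Lemma phi_exp b (K : R) t (v : 'I_n -> R) : symmetric e -> irreflexive e ->
  (forall i, ln 2 * \sum_j (e i j)%:R - (\sum_j (e i j)%:R * (b i - b j)) / 2 <= K) ->
  prob v ->
  exp_avg e t v (Phi b) <= Phi b v + t%:R * (K / (num_edges e)%:R).
Proof.
move=> es ei HK; elim: t v => [|t IH] v pv /=; first by rewrite mul0r addr0.
have Np : 0 < (num_edges e)%:R :> R by rewrite lt_def NE ler0n.
apply: le_trans (_ : (\sum_(p | edge_pred e p) (Phi b (avg_step v p.1 p.2)
    + t%:R * (K / (num_edges e)%:R))) / (num_edges e)%:R <= _).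
  apply: ler_wpM2r; first by rewrite invr_ge0 ltW.
  apply: ler_sum => p /andP [_ lt]; apply: IH; apply: step_prob => //.
  by rewrite neq_ltn lt.
rewrite big_split /= sumr_const -[X in _ *+ X]/(num_edges e) mulrDl.
rewrite -[t%:R * _ *+ _]mulr_natr mulfK; last by rewrite gt_eqF.
have := phi_avg es ei HK pv; rewrite -[t.+1%:R]natr1.
set N := (num_edges e)%:R; set S := \sum_(p | _) _; move=> H.
rewrite mulrDl mul1r; lra.
Qed.

Lemma ent_term (N x : R) : 2 <= N -> 0 <= x -> x <= 1 ->
  ln N * (x - `|x - N^-1| - (x - N^-1)) - x * ln 2 <= ent x.
Proof.
move=> N2 x0 x1.
have Np : 0 < N by lra.
have l2 : 0 <= ln (2:R) by apply: ln_ge0; lra.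
have lN : 0 <= ln N by apply: ln_ge0; lra.
have iNp : 0 < N^-1 by rewrite invr_gt0.
rewrite /ent.
have [->|xz] := eqVneq x 0.
  by rewrite mul0r oppr0 !sub0r normrN gtr0_norm // opprK addNr mulr0 mul0r oppr0 addr0.
have xp : 0 < x by rewrite lt_def xz x0.
case: (lerP x N^-1) => xN.
  have : ln x <= ln N^-1 by rewrite ler_ln ?posrE.
  rewrite lnV ?posrE // => H.
  have : x * ln x <= x * - ln N by apply: ler_wpM2l => //; lra.
  have -> : x - (N^-1 - x) - (x - N^-1) = x by ring.
  have : 0 <= x * ln 2 by apply: mulr_ge0 => //; lra.
  lra.
have -> : x - (x - N^-1) - (x - N^-1) = 2 * N^-1 - x by ring.
case: (lerP x (2 * N^-1)) => x2.
  have : ln x <= ln (2 * N^-1) by rewrite ler_ln ?posrE // mulr_gt0.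
  rewrite lnM ?posrE // lnV ?posrE // => H.
  have : x * ln x <= x * (ln 2 - ln N) by apply: ler_wpM2l => //; lra.
  have : ln N * (2 * N^-1 - x) <= ln N * x by apply: ler_wpM2l => //; lra.
  lra.
have : ln x <= 0 by apply: ln_le0.
have : 0 <= x * ln 2 by apply: mulr_ge0 => //; lra.
have : ln N * (2 * N^-1 - x) <= 0 by apply: mulr_ge0_le0 => //; lra.
move=> h1 h2 h3.
have : x * ln x <= 0 by apply: mulr_ge0_le0 => //; lra.
lra.
Qed.

Lemma prob_le1 (w : 'I_n -> R) k : prob w -> w k <= 1.
Proof.
move=> [w0 w1]; move: w1; rewrite (bigD1 k) //= => H.
have : 0 <= \sum_(i | i != k) w i by apply: sumr_ge0.
lra.
Qed.

Lemma ent_lb (w : 'I_n -> R) : (1 < n)%N -> prob w ->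
  (1 - \sum_k `|w k - n%:R^-1|) * ln n%:R - ln 2 <= \sum_k ent (w k).
Proof.
move=> n1 pw.
have N2 : 2 <= n%:R :> R by rewrite ler_nat.
apply: le_trans (_ : \sum_k (ln n%:R * (w k - `|w k - n%:R^-1| - (w k - n%:R^-1))
   - w k * ln 2) <= _); last first.
  by apply: ler_sum => k _; apply: ent_term => //; [case: pw | exact: prob_le1].
rewrite sumrB -mulr_sumr !sumrB -mulr_suml sumr_const card_ord.
case: pw => _ ->.
rewrite -[n%:R^-1 *+ n]mulr_natr mulVf; last by rewrite gt_eqF //; lra.
rewrite subrr subr0 mul1r mulrC //.
Qed.
End S.

Lemma exmin (R : realType) n (i0 : 'I_n) (b : 'I_n -> R) : exists k, forall j, b k <= b j.
Proof.
case: (@arg_minP _ _ _ i0 xpredT b) => // k _ H; exists k => j; exact: H.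
Qed.

Lemma edges_pos (R : realType) n (e : rel 'I_n) : (1 < n)%N -> symmetric e -> irreflexive e ->
  connected_graph e -> (num_edges e)%:R != (0 : R).
Proof.
move=> n1 es ei conn.
rewrite pnatr_eq0 -lt0n; apply/card_gt0P.
have i0n : (0 < n)%N by apply: ltnW.
set i0 : 'I_n := Ordinal i0n; set i1 : 'I_n := Ordinal n1.
have /connectP [p pth lst] := conn i0 i1.
case: p pth lst => [|y p] /=; first by move=> _ /(congr1 val).
move=> /andP [ey _] _.
have i0y : i0 != y by apply/eqP => h; move: ey; rewrite -h ei.
case: (ltngtP i0 y) => h.
- by exists (i0, y); rewrite unfold_in /edge_pred /= ey h.
- by exists (y, i0); rewrite unfold_in /edge_pred /= es ey h.
- by move: i0y; rewrite (val_inj h) eqxx.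
Qed.

Lemma handshake (R : realType) n (e : rel 'I_n) : symmetric e -> irreflexive e ->
  \sum_i deg R e i = 2 * (num_edges e)%:R.
Proof.
move=> es ei.
have := @pairsum R n e (fun _ _ => 1) es ei; rewrite /= sumr_const.
rewrite -[X in _ *+ X]/(num_edges e) => H.
under eq_bigr do rewrite deg_sum.
transitivity (\sum_i \sum_j (e i j)%:R * (1:R)).
  by apply: eq_bigr => i _; apply: eq_bigr => j _; rewrite mulr1.
rewrite -H -[(1+1) *+ _]mulr_natl; ring.
Qed.

Lemma basis_prob (R : realType) n (k : 'I_n) : prob (basis_vec R k).
Proof.
split; first by move=> x; rewrite /basis_vec ler0n.
rewrite (bigD1 k) //= big1 ?addr0; first by rewrite /basis_vec eqxx.
by move=> x /negbTE; rewrite /basis_vec => ->.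
Qed.

Lemma basis_mean (R : realType) n (k : 'I_n) : mean (basis_vec R k) = n%:R^-1.
Proof. by rewrite /mean (proj2 (basis_prob R k)) mul1r. Qed.

Lemma basis_Phi (R : realType) n (k : 'I_n) b : Phi b (basis_vec R k) = b k.
Proof.
rewrite /Phi (bigD1 k) //= big1 ?addr0; first by rewrite /basis_vec eqxx /ent ln1 !mulr0 oppr0 mulr1 add0r.
by move=> x /negbTE; rewrite /basis_vec /ent => ->; rewrite !mul0r oppr0 mulr0 addr0.
Qed.

Theorem theorem5 (R : realType) (C : R) :
  exists cC : R,
  forall (n : nat) (e : rel 'I_n) (beta : 'cV[R]_n),
    (1 < n)%N ->
    simple_graph e ->
    connected_graph e ->
    (forall i : 'I_n,
        deg R e i <=
        (laplacian R e *m beta) i 0 / (2 * ln 2) + C * avg_deg R e / ln 2) ->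
    exists k : 'I_n,
      forall (eps : R) (t : nat), eps < 1 ->
        t%:R <= (1 - eps) * n%:R * ln n%:R / (2 * C) - cC * n%:R ->
        eps <= exp_avg e t (basis_vec R k)
                 (dist1_mean (mean (basis_vec R k))).
Proof.
exists (if 0 < C then ln 2 / (2 * C) else 1).
move=> n e beta n1 [es ei] conn Hd.
pose b := fun k => beta k 0.
have i0n : (0 < n)%N by apply: ltnW.
have [k kmin] := exmin (Ordinal i0n) b.
exists k => eps t eps1 ht.
have Np : 0 < n%:R :> R by rewrite ltr0n.
have L0 : 0 < ln n%:R :> R by apply: ln_gt0; rewrite ltr1n.
have l2 : 0 < ln 2 :> R by apply: ln_gt0; rewrite ltr1n.
have t0 : 0 <= t%:R :> R by rewrite ler0n.
case: (ltrP 0 C) => Cp; last first.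
  have : (1 - eps) * n%:R * ln n%:R / (2 * C) <= 0.
    apply: mulr_ge0_le0; last by rewrite invr_le0; lra.
    apply: mulr_ge0; last exact: ltW.
    apply: mulr_ge0; lra.
  move: ht; have -> : (0 < C) = false by rewrite ltNge Cp.
  rewrite mul1r; lra.
move: ht; rewrite Cp /= => ht.
have NE : (num_edges e)%:R != (0:R) by apply: edges_pos.
have HS : \sum_i deg R e i = 2 * (num_edges e)%:R by apply: handshake.
have NP : 0 < (num_edges e)%:R :> R by rewrite lt_def NE ler0n.
have HK : forall i, ln 2 * \sum_j (e i j)%:R - (\sum_j (e i j)%:R * (b i - b j)) / 2
            <= C * avg_deg R e.
  move=> i; have := Hd i; rewrite lap_i deg_sum /b.
  set S := \sum_j _ * _; set D := \sum_j _; set A := C * avg_deg R e => H.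
  have := ler_wpM2l (ltW l2) H.
  have -> : ln 2 * (S / (2 * ln 2) + A / ln 2) = S / 2 + A.
    by field; rewrite gt_eqF.
  lra.
have pk := basis_prob R k.
have EP : exp_avg e t (basis_vec R k) (Phi b) <=
   Phi b (basis_vec R k) + t%:R * (C * avg_deg R e / (num_edges e)%:R).
  by apply: phi_exp.
rewrite basis_Phi in EP.
have KN : C * avg_deg R e / (num_edges e)%:R = 2 * C / n%:R.
  by rewrite /avg_deg HS; field; rewrite NE gt_eqF.
rewrite KN in EP.
rewrite basis_mean.
have PW : forall w, prob w -> (- (ln n%:R)^-1) * Phi b w + (1 - (- b k + ln 2) / ln n%:R)
    <= dist1_mean n%:R^-1 w.
  move=> w pw; have EL := ent_lb n1 pw.
  have SB : b k <= \sum_x b x * w x.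
    apply: le_trans (_ : \sum_x b k * w x <= _).
      by rewrite -mulr_sumr (proj2 pw) mulr1.
    by apply: ler_sum => x _; apply: ler_wpM2r; [exact: (proj1 pw x) | exact: kmin].
  rewrite /Phi big_split /= /dist1_mean.
  set E := \sum_i ent _; set Bw := \sum_i b i * w i; set Dw := \sum_i `|_|.
  move: EL SB; rewrite -/E -/Dw -/Bw => EL SB.
  have -> : - (ln n%:R)^-1 * (E + Bw) + (1 - (- b k + ln 2) / ln n%:R)
      = 1 - (E + Bw - b k + ln 2) / ln n%:R by field; rewrite gt_eqF.
  suff : 1 - Dw <= (E + Bw - b k + ln 2) / ln n%:R by lra.
  rewrite ler_pdivlMr //; lra.
have M := exp_avg_mono e t PW pk.
rewrite (exp_avg_lin NE) in M.
apply: le_trans M.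
have hT : t%:R * (2 * C / n%:R) <= (1 - eps) * ln n%:R - ln 2.
  have := ler_wpM2r (_ : 0 <= 2 * C / n%:R) ht.
  have -> : ((1 - eps) * n%:R * ln n%:R / (2 * C) - ln 2 / (2 * C) * n%:R) * (2 * C / n%:R)
     = (1 - eps) * ln n%:R - ln 2 by field; rewrite !gt_eqF.
  apply; apply: divr_ge0; lra.
set T := t%:R * _ in EP hT.
apply: le_trans (_ : - (ln n%:R)^-1 * (b k + T) + (1 - (- b k + ln 2) / ln n%:R) <= _); last first.
  rewrite lerD2r; apply: ler_wnM2l => //.
  by rewrite oppr_le0 invr_ge0 ltW.
have -> : - (ln n%:R)^-1 * (b k + T) + (1 - (- b k + ln 2) / ln n%:R)
   = 1 - (T + ln 2) / ln n%:R by field; rewrite gt_eqF.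
suff : (T + ln 2) / ln n%:R <= 1 - eps by lra.
rewrite ler_pdivrMr //; lra.
Qed.
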